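(* Let $g = 9.8$ and for $d \ge -\frac{(0.48g)^2}{0.8g}$ let $U(d) = 0.48g - \sqrt{(0.48g)^2 + 0.8 g d}$, so that for $d_0\ge 0$, $U'(d_0) = -\frac{0.4g}{\sqrt{(0.48g)^2+0.8gd_0}}$. Fix $\epsilon > 0$ and $d_0 \ge 0$. Define the surrogate red constraints on a pair $(d,v)\in\mathbb{R}^2$ by $$ v \le -\epsilon, \qquad v \le U'(d_0)(d - d_0) + U(d_0) - \epsilon. $$ Then: (i) (Tightness) every pair $(d,v)\in\mathbb{R}^2$ satisfying both surrogate constraints satisfies the red condition, i.e. $v<0$ and $d \le -1.2v + \frac{v^2}{0.8g}$; equivalently, $F(x) = \text{red}$ for every state $x$ whose driving-direction distance and velocity components are $(d,v)$. (ii) (Convexity) Consider the attack optimization in the context below in which the desired light is red at every step of the attack interval. If, for every $t$ in the attack interval, the constraint $F(\tilde x_t) = \text{red}$ is replaced by the two surrogate constraints applied to $(d,v) = (\tilde d_t^{1}, \tilde v_t^{1})$, the driving-direction distance and velocity components of $\tilde x_t$, then the resulting optimization problem in the variables $\{\delta_t\}_{t\in\mathcal{T}^a}$ is a convex optimization problem.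
   Context: FCW alert logic. For a state $x = (d^1, v^1, a^1, d^2, v^2, a^2)\in\mathbb{R}^6$ (distance, velocity, acceleration of the tracked object in the driving direction, then the same in the lateral direction), with safe distance $d^*(v) = -1.2v + v^2/(0.8g)$, $g=9.8$, the warning light is $F(x)=\text{green}$ if $v^1\ge 0$; $F(x)=\text{yellow}$ if $v^1<0$ and $d^1 > d^*(v^1)$; $F(x)=\text{red}$ if $v^1<0$ and $d^1\le d^*(v^1)$. Attack optimization. Fixed data: a state-transition matrix $A\in\mathbb{R}^{6\times 6}$, a measurement matrix $C\in\mathbb{R}^{8\times 6}$, Kalman gain matrices $H_{t}\in\mathbb{R}^{6\times 8}$ (computed independently of measurements), a finite interval of integer time steps $\mathcal{T}^a = \{t_0, \dots, t_1\}$, a fixed initial prediction $\tilde x_{t_0-1}\in\mathbb{R}^6$, measurements $y_t \in \mathbb{R}^8$ for $t\in\mathcal{T}^a$ (components 1–4 are vision measurements of driving-direction distance, driving-direction velocity, lateral distance, lateral velocity; components 5–8 the same from radar), a positive definite matrix $R\in\mathbb{R}^{8\times 8}$, and a bound $\Delta\in(0,\infty]$. The decision variables are $\delta_t\in\mathbb{R}^8$, $t\in\mathcal{T}^a$. The problem is: minimize $\sum_{t\in\mathcal{T}^a}\delta_t^\top R\delta_t$ subject to, for all $t\in\mathcal{T}^a$: $\tilde y_t = y_t + \delta_t$; $\tilde x_t = A(I - H_{t-1}C)\tilde x_{t-1} + A H_{t-1}\tilde y_t$; $\delta_t^i = 0$ for $i\in\{5,6,7,8\}$; $\|\delta_t\|_\infty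 \le \Delta$; the first component of $\tilde y_t$ lies in $[0,75]$ and the second in $[-30,30]$; and $F(\tilde x_t) = \text{red}$. *)

(* Defs.v *)
From HB Require Import structures.
From mathcomp Require Import all_boot all_order all_algebra.
Set Implicit Arguments. Unset Strict Implicit. Unset Printing Implicit Defensive.
Import Order.TTheory GRing.Theory Num.Theory.
Local Open Scope ring_scope.

Section FCW.
Variable R : rcfType.

Definition grav : R := 98%:R / 10%:R.

Definition dstar (v : R) : R := - (12%:R / 10%:R) * v + v ^+ 2 / ((8%:R / 10%:R) * grav).

Inductive light := Green | Yellow | Red.

(* state x = (d1, v1, a1, d2, v2, a2) as a column vector; components 1..6 are
   indices 0..5 *)
Definition F (x : 'cV[R]_6) : light :=
  let d1 := x 0 0 in
  let v1 := x 1 0 in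
  if 0 <= v1 then Green
  else if dstar v1 < d1 then Yellow else Red.

Definition red_cond (d v : R) : Prop := v < 0 /\ d <= dstar v.

Definition c48 : R := (48%:R / 100%:R) * grav.
Definition U (d : R) : R := c48 - Num.sqrt (c48 ^+ 2 + (8%:R / 10%:R) * grav * d).
Definition Uprime (d0 : R) : R :=
  - ((4%:R / 10%:R) * grav) / Num.sqrt (c48 ^+ 2 + (8%:R / 10%:R) * grav * d0).

Definition surrogate (eps d0 d v : R) : Prop :=
  v <= - eps /\ v <= Uprime d0 * (d - d0) + U d0 - eps.

(* positive definite (no symmetry assumed) *)
Definition posdef (n : nat) (M : 'M[R]_n) : Prop :=
  forall u : 'cV[R]_n, u != 0 -> 0 < (u^T *m M *m u) 0 0.

Definition inf_norm (n : nat) (u : 'cV[R]_n) : R := \big[Num.max/0]_(j < n) `|u j 0|.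

(* Attack interval T^a = {t0, ..., t0 + N - 1}; the decision variable
   delta : 'I_N -> 'cV_8 has delta k = delta_{t0+k}.  y k = y_{t0+k},
   H k = H_{t0-1+k}, x0 = tilde x_{t0-1}. *)
Definition ext (N : nat) (delta : 'I_N -> 'cV[R]_8) (k : nat) : 'cV[R]_8 :=
  match (insub k : option 'I_N) with
  | Some i => delta i
  | None => 0
  end.

(* traj k = tilde x_{t0-1+k}, so tilde x_{t0+k} = traj (k+1) *)
Fixpoint traj (A : 'M[R]_6) (C : 'M[R]_(8,6)) (H : nat -> 'M[R]_(6,8))
  (x0 : 'cV[R]_6) (y : nat -> 'cV[R]_8) (N : nat) (delta : 'I_N -> 'cV[R]_8)
  (k : nat) : 'cV[R]_6 :=
  match k with
  | 0 => x0
  | k'.+1 => A *m (1%:M - H k' *m C) *m traj A C H x0 y delta k'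
             + A *m H k' *m (y k' + ext delta k')
  end.

Definition objective (N : nat) (Rm : 'M[R]_8) (delta : 'I_N -> 'cV[R]_8) : R :=
  \sum_(i < N) ((delta i)^T *m Rm *m delta i) 0 0.

(* feasible set of the surrogate (red at every step) problem;
   Delta = None encodes Delta = +infinity *)
Definition surrogate_feasible (A : 'M[R]_6) (C : 'M[R]_(8,6)) (H : nat -> 'M[R]_(6,8))
  (x0 : 'cV[R]_6) (y : nat -> 'cV[R]_8) (Delta : option R) (eps d0 : R)
  (N : nat) (delta : 'I_N -> 'cV[R]_8) : Prop :=
  forall i : 'I_N,
    let yt := y i + delta i in
    let xt := traj A C H x0 y delta i.+1 in
    [/\ (forall j : 'I_8, (4 <= j)%N -> delta i j 0 = 0),
        (match Delta with Some D => inf_norm (delta i) <= D | None => True end),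
        0 <= yt 0 0 <= 75%:R,
        - 30%:R <= yt 1 0 <= 30%:R &
        surrogate eps d0 (xt 0 0) (xt 1 0)].

Definition convex_problem (I : Type) (n : nat) (J : (I -> 'cV[R]_n) -> R)
  (S : (I -> 'cV[R]_n) -> Prop) : Prop :=
  (forall (u w : I -> 'cV[R]_n) (l : R), 0 <= l <= 1 -> S u -> S w ->
     S (fun i => l *: u i + (1 - l) *: w i)) /\
  (forall (u w : I -> 'cV[R]_n) (l : R), 0 <= l <= 1 ->
     J (fun i => l *: u i + (1 - l) *: w i) <= l * J u + (1 - l) * J w).

End FCW.

(* Main.v *)
Require Import Defs.
From HB Require Import structures.
From mathcomp Require Import all_boot all_order all_algebra.
From mathcomp Require Import ring lra.
Import Order.TTheory GRing.Theory Num.Theory.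
Local Open Scope ring_scope.

Lemma part1 (R : rcfType) (eps d0 : R) (heps : 0 < eps) (hd0 : 0 <= d0) d v :
  surrogate eps d0 d v -> red_cond d v.
Proof.
rewrite /surrogate /red_cond /Uprime /U /dstar /c48 /grav.
set k := (8%:R / 10%:R) * (98%:R / 10%:R) : R.
set c := (48%:R / 100%:R * (98%:R / 10%:R)) : R.
have kE : k = 392%:R / 50%:R by rewrite /k; field.
have cE : c = 588%:R / 125%:R by rewrite /c; field.
move=> -[h1 h2].
have E4 : (4%:R / 10%:R * (98%:R / 10%:R)) = k / 2 by rewrite kE; field.
rewrite E4 in h2.
have -> : 12%:R / 10%:R = 2 * c / k by rewrite kE cE; field.
have kp : 0 < k by rewrite kE; lra.
have cp : 0 < c by rewrite cE; lra.
set s := Num.sqrt (c ^+ 2 + k * d0).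
have hs : 0 <= c ^+ 2 + k * d0 by nra.
have s2 : s ^+ 2 = c ^+ 2 + k * d0 by rewrite sqr_sqrtr.
have s0 : 0 <= s by apply: sqrtr_ge0.
have sp : 0 < s by nra.
split; first lra.
have h3 : s * v <= - (k / 2) * (d - d0) + s * (c - s - eps).
  have := ler_wpM2l s0 h2.
  have -> : s * (- (k / 2) / s * (d - d0) + (c - s) - eps) = - (k / 2) * (d - d0) + s * (c - s - eps).
    by field; rewrite gt_eqF.
  by [].
have -> : - (2 * c / k) * v + v ^+ 2 / k = (v ^+ 2 - 2 * c * v) / k by field; rewrite gt_eqF.
rewrite ler_pdivlMr //.
have q1 : 0 <= (v - c + s) ^+ 2 by apply: sqr_ge0.
have q2 : 0 <= s * eps by nra.
clearbody s k c; clear kE cE h2 E4 hs.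
nra.
Qed.

Lemma ext_comb (R : rcfType) N (u w : 'I_N -> 'cV[R]_8) (l : R) k :
  ext (fun i => l *: u i + (1 - l) *: w i) k = l *: ext u k + (1 - l) *: ext w k.
Proof. by rewrite /ext; case: insub => [i|] //; rewrite !scaler0 addr0. Qed.

Lemma comb_aux (R : rcfType) (V : lmodType R) (a b p q r : V) (l : R) :
  l *: a + (1 - l) *: b + (p + (l *: q + (1 - l) *: r)) =
  l *: (a + (p + q)) + (1 - l) *: (b + (p + r)).
Proof.
rewrite !scalerDr [RHS]addrACA; congr (_ + _).
by rewrite [RHS]addrACA -scalerDl (addrC l (1 - l)) subrK scale1r.
Qed.

Lemma traj_comb (R : rcfType) A C H x0 y N (u w : 'I_N -> 'cV[R]_8) (l : R) k :
  traj A C H x0 y (fun i => l *: u i + (1 - l) *: w i) k =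
  l *: traj A C H x0 y u k + (1 - l) *: traj A C H x0 y w k.
Proof.
elim: k => [|k IH] /=.
  by rewrite -scalerDl addrC subrK scale1r.
rewrite IH ext_comb !mulmxDr -!scalemxAr.
exact: comb_aux.
Qed.

Lemma bil_lin (R : rcfType) (Rm : 'M[R]_8) (a b : R) (x z v : 'cV[R]_8) :
  ((a *: x + b *: z)^T *m Rm *m v) 0 0 = a * (x^T *m Rm *m v) 0 0 + b * (z^T *m Rm *m v) 0 0.
Proof. by rewrite linearD /= !linearZ /= !mulmxDl -!scalemxAl !mxE. Qed.

Lemma bil_linr (R : rcfType) (Rm : 'M[R]_8) (a b : R) (x z v : 'cV[R]_8) :
  (v^T *m Rm *m (a *: x + b *: z)) 0 0 = a * (v^T *m Rm *m x) 0 0 + b * (v^T *m Rm *m z) 0 0.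
Proof. by rewrite !mulmxDr -!scalemxAr !mxE. Qed.

Lemma bil_ge0 (R : rcfType) (Rm : 'M[R]_8) (x : 'cV[R]_8) :
  posdef Rm -> 0 <= (x^T *m Rm *m x) 0 0.
Proof.
move=> hR; have [->|nz] := eqVneq x 0.
  by rewrite trmx0 !mul0mx mxE.
exact: ltW (hR x nz).
Qed.

Theorem proposition1 (R : rcfType) (eps d0 : R) (heps : 0 < eps) (hd0 : 0 <= d0) :
  (* (i) tightness *)
  (forall d v : R, surrogate eps d0 d v ->
     red_cond d v /\
     (forall x : 'cV[R]_6, x 0 0 = d -> x 1 0 = v -> F x = Red)) /\
  (* (ii) convexity *)
  (forall (A : 'M[R]_6) (C : 'M[R]_(8,6)) (H : nat -> 'M[R]_(6,8))
          (x0 : 'cV[R]_6) (y : nat -> 'cV[R]_8) (Rm : 'M[R]_8)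
          (Delta : option R) (N : nat),
     (0 < N)%N -> posdef Rm ->
     (forall D, Delta = Some D -> 0 < D) ->
     convex_problem (@objective R N Rm)
                    (@surrogate_feasible R A C H x0 y Delta eps d0 N)).
Proof.
split.
  move=> d v hs; have hr := @part1 R eps d0 heps hd0 d v hs; split=> // x hx hv.
  case: hr => h1 h2.
  by rewrite /F hx hv leNgt h1 /= ltNge h2.
move=> A C H x0 y Rm Delta N _ hR hD; split.
  move=> u w l /andP[l0 l1] Su Sw i.
  have := Su i; have := Sw i; rewrite traj_comb; cbv zeta.
  set X := traj A C H x0 y u i.+1; set Y := traj A C H x0 y w i.+1.
  move=> [b1 b2 b3 b4 b5] [a1 a2 a3 a4 a5].
  split.
  - move=> j hj; rewrite !mxE a1 // b1 //; ring.
  - clear Su Sw hD; move: a2 b2; case: Delta => // D a2 b2.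
    move/bigmax_leP: a2 => [D0 a2]; move/bigmax_leP: b2 => [_ b2].
    apply/bigmax_leP; split => // j _.
    rewrite !mxE; apply: le_trans (ler_normD _ _) _.
    rewrite !normrM (ger0_norm l0) (ger0_norm (_ : 0 <= 1 - l)); last lra.
    have := a2 j isT; have := b2 j isT.
    move=> hw hu; clear -hw hu l0 l1; nra.
  - move: a3 b3; rewrite !mxE => /andP[a3 a3'] /andP[b3 b3'].
    apply/andP; split; nra.
  - move: a4 b4; rewrite !mxE => /andP[a4 a4'] /andP[b4 b4'].
    apply/andP; split; nra.
  - move: a5 b5; rewrite /surrogate !mxE => -[a5 a5'] [b5 b5'].
    split; nra.
move=> u w l /andP[l0 l1].
rewrite /objective !mulr_sumr -big_split; apply: ler_sum => i _ /=.
rewrite bil_lin !bil_linr.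
have := @bil_ge0 R Rm (1 *: u i + (-1) *: w i) hR.
rewrite bil_lin !bil_linr.
have hl : 0 <= l * (1 - l) by nra.
nra.
Qed.
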